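(* Let $\{A_1,\ldots,A_q\}$ be a collection of sets, each of size at least one, such that all but at most one of them have size exactly $2$, and each element appears in at most two of the sets. Then $\{A_1,\ldots,A_q\}$ has a system of distinct representatives, i.e., there exist pairwise distinct elements $a_1,\ldots,a_q$ with $a_i\in A_i$ for all $i\in[q]$. *)

(* Defs.v *)
From mathcomp Require Import all_boot.
Set Implicit Arguments. Unset Strict Implicit. Unset Printing Implicit Defensive.

Definition has_SDR (T : finType) (q : nat) (A : 'I_q -> {set T}) : Prop :=
  exists a : 'I_q -> T, injective a /\ forall i, a i \in A i.

(* Main.v *)
Require Import Defs.
From mathcomp Require Import all_boot.
From mathcomp Require Import zify.

Lemma gen (T : finType) (t0 : T) (I : finType) n : forall (S : {set I}) (A : I -> {set T}),
  #|S| = n ->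
  (forall i, i \in S -> 0 < #|A i|) ->
  (forall i j, i \in S -> j \in S -> i != j -> #|A i| != 2 -> #|A j| = 2) ->
  (forall x i j k, i \in S -> j \in S -> k \in S -> i != j -> i != k -> j != k ->
     x \in A i -> x \in A j -> x \in A k -> False) ->
  exists a : I -> T, {in S &, injective a} /\ forall i, i \in S -> a i \in A i.
Proof.
elim: n => [|n IH] S A hS H1 H2 H3.
  move/eqP: hS; rewrite cards_eq0 => /eqP ->.
  by exists (fun _ => t0); split => [i j|i]; rewrite inE.
have [i0 [i0S hi0]] : exists i0, i0 \in S /\ forall j, j \in S -> j != i0 -> #|A j| = 2.
  case: (pickP [pred i | (i \in S) && (#|A i| != 2)]) => [i /andP[iS ne]|none].
    exists i; split=> // j jS jne; apply: (H2 i j iS jS _ ne); by rewrite eq_sym.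
  have : 0 < #|S| by rewrite hS.
  rewrite card_gt0 => /set0Pn [i iS]; exists i; split => // j jS _.
  by move: (none j) => /=; rewrite jS /= => /negbFE /eqP.
have := H1 i0 i0S; rewrite card_gt0 => /set0Pn [x xA].
have [a' [ainj aA]] : exists a' : I -> T, {in S :\ i0 &, injective a'} /\
    forall i, i \in S :\ i0 -> a' i \in A i :\ x.
  apply: (IH (S :\ i0) (fun j => A j :\ x)).
  - by move: hS; rewrite (cardsD1 i0 S) i0S => -[].
  - move=> j; rewrite !inE => /andP[jn jS].
    have := hi0 j jS jn; rewrite (cardsD1 x (A j)); case: (x \in A j) => /=; lia.
  - move=> i j; rewrite !inE => /andP[inn iS] /andP[jn jS] ij.
    have := hi0 i iS inn; rewrite (cardsD1 x (A i)).
    case xi: (x \in A i) => /=; last by lia.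
    move=> _ _.
    have := hi0 j jS jn; rewrite (cardsD1 x (A j)).
    case xj: (x \in A j) => /=; last by [].
    exfalso; apply: (H3 x i0 i j i0S iS jS) => //; by rewrite eq_sym.
  - move=> y i j k; rewrite !inE => /andP[_ iS] /andP[_ jS] /andP[_ kS] ij ik jk.
    move=> /andP[_ yi] /andP[_ yj] /andP[_ yk].
    exact: (H3 y i j k iS jS kS ij ik jk yi yj yk).
exists (fun j => if j == i0 then x else a' j); split.
  move=> j k jS kS /=.
  case: eqP => [->|/eqP jn]; case: eqP => [->|/eqP kn] //.
  - move=> e; have : a' k \in A k :\ x by apply: aA; rewrite !inE kn.
    by rewrite -e !inE eqxx.
  - move=> e; have : a' j \in A j :\ x by apply: aA; rewrite !inE jn.
    by rewrite e !inE eqxx.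
  - by apply: ainj; rewrite !inE ?jn ?kn.
move=> j jS /=; case: eqP => [->|/eqP jn] //.
have : a' j \in A j :\ x by apply: aA; rewrite !inE jn.
by rewrite !inE => /andP[].
Qed.

Theorem lemma42 (T : finType) (q : nat) (A : 'I_q -> {set T}) :
  (forall i, 0 < #|A i|) ->
  (forall i j, i != j -> #|A i| != 2 -> #|A j| = 2) ->
  (forall x : T, #|[set i | x \in A i]| <= 2) ->
  has_SDR A.
Proof.
case: q A => [|q] A H1 H2 H3.
  have f : 'I_0 -> T by case=> m; rewrite ltn0.
  by exists f; split => [[m hm]|[m hm]]; exfalso; rewrite ltn0 in hm.
have := H1 ord0; rewrite card_gt0 => /set0Pn [t0 _].
have H3' : forall x i j k, i \in [set: 'I_q.+1] -> j \in [set: 'I_q.+1] -> k \in [set: 'I_q.+1] ->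
    i != j -> i != k -> j != k -> x \in A i -> x \in A j -> x \in A k -> False.
  move=> x i j k _ _ _ ij ik jk xi xj xk.
  have h3 := H3 x; set B := [set _ | _] in h3.
  have sub : [set i; j; k] \subset B.
    by apply/subsetP => l; rewrite /B !inE => /orP[/orP[/eqP->|/eqP->]|/eqP->].
  have := leq_trans (subset_leq_card sub) h3.
  have -> : [set i; j; k] = i |: (j |: [set k]).
    by apply/setP => l; rewrite !inE orbA.
  by rewrite !cardsU1 cards1 !inE negb_or ij ik jk.
have [a [ai aA]] := @gen T t0 _ _ [set: 'I_q.+1] A erefl
  (fun i _ => H1 i) (fun i j _ _ => H2 i j) H3'.
by exists a; split => [i j e|i]; [apply: ai; rewrite ?inE | apply: aA; rewrite inE].
Qed.
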